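(* Let $a\in(0,1)$ and let $(\mu_n)_{n\in\mathbb{N}}$ be mutation probabilities with $n\mu_n\to\theta\in[0,\infty)$. There is a constant $c>0$ such that for all integers $r\ge2$ and $j\in\{1,2\}$, $$\sup_{n}\mathbb{P}\big[n^{-1}B^{n,\mu_n}>a\,\big|\,\xi^{\mu_n}=r,\Xi_j^{\mu_n}\big]\le\sup_{n}\mathbb{P}\big[n^{-1}\hat B^{n,\mu_n}>a\,\big|\,\xi^{\mu_n}=r,\Xi_j^{\mu_n}\big]\le c\,r^{-2},$$ where the suprema are over those $n$ for which the conditioning event has positive probability.
   Context: Basic model with a fixed site $i$, on the Yule tree. $\mathcal{T}=\bigcup_{l\ge0}\{0,1\}^l$ (binary words; $\emptyset$ the initial cell; $x\prec y$ iff $x$ is a proper prefix of $y$; $x\preceq y$ iff $x\prec y$ or $x=y$). Lifetimes $(A_x)$ i.i.d. Exp(1); $\mathcal{T}_t=\{x:\sum_{y\prec x}A_y\le t<\sum_{y\preceq x}A_y\}$; $\sigma_r=\min\{t:|\mathcal{T}_t|=r\}$. Nucleotides at site $i$: $V(\emptyset)=u_i$; given $V(x)=v$, each daughter $xj$ independently has $V(xj)=\psi$ with probability $\mu/3$ for each $\psi\in\{A,C,G,T\}\setminus\{v\}$ and $V(xj)=v$ with probability $1-\mu$, independently across divisions. $B^{r,\mu}=|\{x\in\mathcal{T}_{\sigma_r}:V(x)\ne u_i\}|$; $\hat B^{r,\mu}=|\{y\in\mathcal{T}_{\sigma_r}:\exists x\preceq y,\ V(x)\ne u_i\}|$. $\xi^\mu=\min\{r:B^{r,\mu}>0\}$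 and $\Xi_j^\mu=\{B^{\xi^\mu,\mu}=j\}$. *)

(* Defs.v *)
From Stdlib Require Import Bool Reals List Arith Lra.
Import ListNotations.
Open Scope R_scope.
Open Scope bool_scope.

Inductive nuc := NA | NC | NG | NT.

Definition nuc_eq_dec (x y : nuc) : {x = y} + {x <> y}.
Proof. decide equality. Defined.

Definition all_nucs : list nuc := [NA; NC; NG; NT].

(** A living cell of the Yule tree: its binary word x, and the nucleotides
    V(y) of all y with y ⪯ x, listed from x (head) back to the root. *)
Record cell := mkCell { word : list bool; anc : list nuc }.

(** V(x) (the default is never used: [anc] is never empty). *)
Definition Vc (u : nuc) (c : cell) : nuc := hd u (anc c).

(** State of the process at a jump time σ_r : the cells of T_{σ_r}. *)
Definition state := list cell.

Definition qmut (mu : R) (v w : nuc) : R :=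
  if nuc_eq_dec v w then 1 - mu else mu / 3.

Definition daughters (c : cell) (v0 v1 : nuc) : list cell :=
  [mkCell (word c ++ [false]) (v0 :: anc c);
   mkCell (word c ++ [true])  (v1 :: anc c)].

Definition divide (s : state) (i : nat) (v0 v1 : nuc) : state :=
  firstn i s ++ daughters (nth i s (mkCell [] [])) v0 v1 ++ skipn (S i) s.

Definition init_cell (u : nuc) : cell := mkCell [] [u].

(** Exact law of the trajectory (T_{σ_1}, ..., T_{σ_(m+1)}) with the
    nucleotides, as a finite list of (probability weight, trajectory),
    trajectories stored most recent state first.  At each jump time of the
    Yule process (i.i.d. Exp(1) lifetimes) the dividing cell is uniform among
    the current cells (memorylessness), and each daughter mutates
    independently. *)
Definition step (mu : R) (u : nuc) (d : list (R * list state))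
  : list (R * list state) :=
  flat_map (fun p : R * list state =>
    let (w, tr) := p in
    match tr with
    | [] => []
    | s :: _ =>
      flat_map (fun i =>
        let v := Vc u (nth i s (mkCell [] [])) in
        flat_map (fun v0 =>
          map (fun v1 =>
            (w * / INR (length s) * qmut mu v v0 * qmut mu v v1,
             divide s i v0 v1 :: tr))
          all_nucs) all_nucs) (seq 0 (length s))
    end) d.

Fixpoint dist (mu : R) (u : nuc) (m : nat) : list (R * list state) :=
  match m with
  | O => [(1, [[init_cell u]])]
  | S m' => step mu u (dist mu u m')
  end.

(** T_{σ_k} inside a trajectory of length N (1 <= k <= N). *)
Definition state_at (tr : list state) (k : nat) : state :=
  nth (length tr - k) tr [].

Definition Bcount (u : nuc) (s : state) : nat :=
  length (filter (fun c => if nuc_eq_dec (Vc u c) u then false else true) s).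

Definition Bhat (u : nuc) (s : state) : nat :=
  length (filter (fun c =>
    existsb (fun v => if nuc_eq_dec v u then false else true) (anc c)) s).

Definition Prob (mu : R) (u : nuc) (N : nat) (E : list state -> bool) : R :=
  fold_right (fun (p : R * list state) (acc : R) => let (w, tr) := p in if E tr then w + acc else acc)
    0 (dist mu u (N - 1)).

Definition condProb (mu : R) (u : nuc) (N : nat)
  (E F : list state -> bool) : R :=
  Prob mu u N (fun tr => E tr && F tr) / Prob mu u N F.

(** The event {ξ^μ = r} ∩ Ξ_j (needs the trajectory up to σ_r). *)
Definition xi_Xi (u : nuc) (r j : nat) (tr : list state) : bool :=
  forallb (fun k => Nat.eqb (Bcount u (state_at tr k)) 0) (seq 1 (r - 1))
  && Nat.eqb (Bcount u (state_at tr r)) j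
  && Nat.ltb 0 j.

Definition B_gt (u : nuc) (n : nat) (a : R) (tr : list state) : bool :=
  if Rlt_dec a (INR (Bcount u (state_at tr n)) / INR n) then true else false.

Definition Bhat_gt (u : nuc) (n : nat) (a : R) (tr : list state) : bool :=
  if Rlt_dec a (INR (Bhat u (state_at tr n)) / INR n) then true else false.

(* Main.v *)
Require Import Defs.
From Stdlib Require Import Reals List Arith Lia Lra Psatz Bool.
Import ListNotations.
Open Scope R_scope.


Fixpoint sumR {A} (l : list A) (f : A -> R) : R :=
  match l with [] => 0 | x :: l' => f x + sumR l' f end.

Lemma sumR_app {A} (l1 l2 : list A) f : sumR (l1 ++ l2) f = sumR l1 f + sumR l2 f.
Proof. induction l1; simpl; [ring| rewrite IHl1; ring]. Qed.

Lemma sumR_flat_map {A B} (l : list A) (g : A -> list B) f :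
  sumR (flat_map g l) f = sumR l (fun x => sumR (g x) f).
Proof. induction l; simpl; [ring| rewrite sumR_app, IHl; ring]. Qed.

Lemma sumR_map {A B} (l : list A) (g : A -> B) f : sumR (map g l) f = sumR l (fun x => f (g x)).
Proof. induction l; simpl; [ring| rewrite IHl; ring]. Qed.

Lemma sumR_ext_in {A} (l : list A) f g : (forall x, In x l -> f x = g x) -> sumR l f = sumR l g.
Proof. induction l; simpl; intros H; [ring|]. rewrite H, IHl; auto. Qed.

Lemma sumR_le_in {A} (l : list A) f g : (forall x, In x l -> f x <= g x) -> sumR l f <= sumR l g.
Proof. induction l; simpl; intros H; [lra|]. specialize (IHl (fun x h => H x (or_intror h))).
  specialize (H a (or_introl eq_refl)). lra. Qed.

Lemma sumR_scal {A} (l : list A) c f : sumR l (fun x => c * f x) = c * sumR l f.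
Proof. induction l; simpl; [ring| rewrite IHl; ring]. Qed.

Definition EV (d : list (R * list state)) (g : list state -> R) :=
  sumR d (fun p => fst p * g (snd p)).

Lemma Prob_EV mu u N E : Prob mu u N E = EV (Defs.dist mu u (N-1)) (fun tr => if E tr then 1 else 0).
Proof. unfold Prob, EV. induction (Defs.dist mu u (N-1)) as [|[w tr] d IH]; simpl; [ring|].
  rewrite IH. destruct (E tr); ring. Qed.

Definition Gop (mu:R) (u:nuc) (g : list state -> R) (tr : list state) : R :=
  match tr with
  | [] => 0
  | s :: _ => sumR (seq 0 (length s)) (fun i =>
      sumR all_nucs (fun v0 => sumR all_nucs (fun v1 =>
        / INR (length s) * (qmut mu (Vc u (nth i s (mkCell [] []))) v0 *
           qmut mu (Vc u (nth i s (mkCell [] []))) v1 * g (divide s i v0 v1 :: tr)))))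
  end.

Lemma EV_step mu u d g : EV (step mu u d) g = EV d (Gop mu u g).
Proof.
  unfold EV, step. rewrite sumR_flat_map. apply sumR_ext_in. intros [w tr] _.
  destruct tr as [|s tr]; cbn [fst snd Gop]; [simpl; ring|].
  rewrite sumR_flat_map, <- sumR_scal. apply sumR_ext_in; intros i _.
  rewrite sumR_flat_map, <- sumR_scal. apply sumR_ext_in; intros v0 _.
  rewrite sumR_map, <- sumR_scal. apply sumR_ext_in; intros v1 _.
  cbn [fst snd]. ring.
Qed.

Inductive valid (u:nuc) : list state -> Prop :=
| valid1 : valid u [[init_cell u]]
| validS : forall s tr i v0 v1, valid u (s::tr) -> (i < length s)%nat ->
    valid u (divide s i v0 v1 :: s :: tr).

Lemma length_divide s i v0 v1 : (i < length s)%nat -> length (divide s i v0 v1) = S (length s).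
Proof. intros H. unfold divide. rewrite !length_app. cbn [length daughters]. rewrite length_firstn, length_skipn. lia. Qed.

Lemma valid_len u s tr : valid u (s::tr) -> length s = length (s::tr).
Proof.
  intros H. remember (s::tr) as l eqn:E. revert s tr E.
  induction H; intros s' tr' E; inversion E; subst; auto.
  rewrite length_divide by auto. rewrite (IHvalid s tr eq_refl). reflexivity.
Qed.

Lemma qmut_nonneg mu v w : 0 <= mu <= 1 -> 0 <= qmut mu v w.
Proof. intros. unfold qmut. destruct nuc_eq_dec; lra. Qed.

Lemma dist_support mu u m : 0 <= mu <= 1 -> forall w tr, In (w,tr) (Defs.dist mu u m) ->
  0 <= w /\ valid u tr /\ length tr = S m.
Proof.
  intros Hmu. induction m as [|m IH]; intros w tr H.
  - simpl in H. destruct H as [H|[]]. inversion H; subst. repeat split; try lra. constructor.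
  - simpl in H. unfold step in H. apply in_flat_map in H. destruct H as [[w' tr'] [Hin H]].
    destruct (IH _ _ Hin) as [Hw [Hv Hl]].
    destruct tr' as [|s tr0]; [destruct H|].
    apply in_flat_map in H. destruct H as [i [Hi H]].
    apply in_flat_map in H. destruct H as [v0 [_ H]].
    apply in_map_iff in H. destruct H as [v1 [E _]]. inversion E; subst.
    apply in_seq in Hi.
    assert (0 < INR (length s)) by (apply lt_0_INR; lia).
    repeat split.
    + repeat apply Rmult_le_pos; auto using qmut_nonneg. left; apply Rinv_0_lt_compat; auto.
    + constructor; auto. lia.
    + simpl in *. lia.
Qed.

Definition marked (u : nuc) (c : cell) : bool :=
  existsb (fun v => if nuc_eq_dec v u then false else true) (anc c).
Definition mutc (u : nuc) (c : cell) : bool :=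
  if nuc_eq_dec (Vc u c) u then false else true.

Lemma Bhat_eq u s : Bhat u s = length (filter (marked u) s).
Proof. reflexivity. Qed.
Lemma Bcount_eq u s : Bcount u s = length (filter (mutc u) s).
Proof. reflexivity. Qed.

Definition dflt := mkCell [] [].

Lemma split_nth (s : state) i : (i < length s)%nat ->
  s = firstn i s ++ nth i s dflt :: skipn (S i) s.
Proof.
  revert i; induction s as [|c s IH]; intros i H; simpl in H; [lia|].
  destruct i; simpl; auto. f_equal. apply IH. lia.
Qed.

Definition b2n (b : bool) : nat := if b then 1%nat else 0%nat.

Lemma count_divide (p : cell -> bool) s i v0 v1 : (i < length s)%nat ->
  (length (filter p (divide s i v0 v1)) + b2n (p (nth i s dflt)) =
   length (filter p s) + b2n (p (mkCell (word (nth i s dflt) ++ [false]) (v0 :: anc (nth i s dflt))))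
    + b2n (p (mkCell (word (nth i s dflt) ++ [true]) (v1 :: anc (nth i s dflt)))))%nat.
Proof.
  intros H.
  assert (E : length (filter p s) = (length (filter p (firstn i s)) + b2n (p (nth i s dflt))
     + length (filter p (skipn (S i) s)))%nat).
  { rewrite (split_nth s i H) at 1. rewrite filter_app, length_app. simpl.
    unfold b2n; destruct (p (nth i s dflt)); simpl; lia. }
  rewrite E. unfold divide. rewrite !filter_app, !length_app. unfold daughters.
  fold dflt. simpl filter.
  unfold b2n; destruct (p (nth i s dflt)); destruct (p (mkCell _ (v0 :: _)));
  destruct (p (mkCell _ (v1 :: _))); simpl; lia.
Qed.

Lemma filter_le {A} (p q : A -> bool) l : (forall x, p x = true -> q x = true) ->
  (length (filter p l) <= length (filter q l))%nat.
Proof.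
  intros H; induction l as [|x l IH]; simpl; [lia|].
  destruct (p x) eqn:E; [rewrite (H x E)|destruct (q x)]; simpl; lia.
Qed.

Lemma mutc_marked u c : mutc u c = true -> marked u c = true.
Proof.
  unfold mutc, marked, Vc. destruct c as [w l]; simpl. destruct l as [|v l]; simpl.
  - destruct nuc_eq_dec; congruence.
  - intros H. rewrite H. reflexivity.
Qed.

Lemma Bcount_le_Bhat u s : (Bcount u s <= Bhat u s)%nat.
Proof. rewrite Bhat_eq, Bcount_eq. apply filter_le, mutc_marked. Qed.

Lemma unmarked_Vc u c : marked u c = false -> Vc u c = u.
Proof.
  unfold marked, Vc. destruct c as [w l]; simpl. destruct l as [|v l]; simpl; auto.
  intros H. apply orb_false_iff in H. destruct H. destruct nuc_eq_dec; congruence.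
Qed.

Lemma Bhat0_all u s : Bhat u s = 0%nat -> forall c, In c s -> marked u c = false.
Proof.
  rewrite Bhat_eq. intros H c Hc. apply length_zero_iff_nil in H.
  destruct (marked u c) eqn:E; auto.
  assert (In c (filter (marked u) s)) by (apply filter_In; auto). rewrite H in H0. destruct H0.
Qed.

Lemma marked_cons u w v c : marked u (mkCell w (v :: anc c)) =
  (if nuc_eq_dec v u then false else true) || marked u c.
Proof. reflexivity. Qed.
Lemma mutc_cons u w v l : mutc u (mkCell w (v :: l)) = if nuc_eq_dec v u then false else true.
Proof. reflexivity. Qed.

Lemma HL u s i v0 v1 : Bhat u s = 0%nat -> (i < length s)%nat ->
  Bhat u (divide s i v0 v1) = Bcount u (divide s i v0 v1).
Proof.
  intros H0 Hi.
  pose proof (count_divide (marked u) s i v0 v1 Hi) as E1.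
  pose proof (count_divide (mutc u) s i v0 v1 Hi) as E2.
  rewrite <- Bhat_eq, <- Bcount_eq in *.
  assert (Hc : marked u (nth i s dflt) = false) by (apply (Bhat0_all u s H0), nth_In; auto).
  pose proof (Bcount_le_Bhat u s).
  assert (mutc u (nth i s dflt) = false).
  { destruct (mutc u (nth i s dflt)) eqn:E; auto. apply mutc_marked in E. congruence. }
  rewrite Hc, H1 in *. rewrite !marked_cons, !mutc_cons, Hc in *.
  rewrite !orb_false_r in *. rewrite <- Bhat_eq in E1; rewrite <- Bcount_eq in E2. lia.
Qed.

Lemma state_at_cons s tr k : (k <= length tr)%nat -> state_at (s::tr) k = state_at tr k.
Proof. intros H. unfold state_at. simpl length. replace (S (length tr) - k)%nat with (S (length tr - k)) by lia. reflexivity. Qed.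

Lemma state_at_top s tr : state_at (s::tr) (length (s::tr)) = s.
Proof. unfold state_at. rewrite Nat.sub_diag. reflexivity. Qed.

Lemma Bhat_init u : Bhat u [init_cell u] = 0%nat.
Proof. unfold Bhat, init_cell. simpl. destruct (nuc_eq_dec u u); [reflexivity|congruence]. Qed.

Lemma GL u tr : valid u tr -> forall k, (1 <= k <= length tr)%nat ->
  (forall k', (1 <= k' <= k)%nat -> Bcount u (state_at tr k') = 0%nat) ->
  Bhat u (state_at tr k) = 0%nat.
Proof.
  intros Hv; induction Hv as [|s tr i v0 v1 Hv IH Hi]; intros k Hk Hz.
  - simpl in Hk. assert (k = 1%nat) by lia. subst. apply Bhat_init.
  - destruct (Nat.le_gt_cases k (length (s::tr))) as [Hle|Hgt].
    + rewrite state_at_cons by auto. apply IH; [simpl in *; lia|]. intros k' Hk'.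
      rewrite <- (state_at_cons (divide s i v0 v1)) by lia. apply Hz; lia.
    + simpl length in Hk, Hgt. assert (k = length (divide s i v0 v1 :: s :: tr)) by (simpl; lia).
      subst k. rewrite state_at_top.
      assert (Hs : Bhat u s = 0%nat).
      { rewrite <- (state_at_top s tr). apply IH; [simpl; lia|]. intros k' Hk'.
        rewrite <- (state_at_cons (divide s i v0 v1)) by lia. apply Hz. simpl in *; lia. }
      rewrite HL by auto. rewrite <- (state_at_top _ (s::tr)). apply Hz. lia.
Qed.

Lemma forallb_ext_in {A} (f g : A -> bool) l : (forall x, In x l -> f x = g x) -> forallb f l = forallb g l.
Proof. induction l; simpl; intros H; auto. rewrite H, IHl; auto. Qed.

Lemma xi_cons u r j s tr : (r <= length tr)%nat -> xi_Xi u r j (s::tr) = xi_Xi u r j tr.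
Proof.
  intros H. unfold xi_Xi. rewrite state_at_cons by auto.
  rewrite (forallb_ext_in _ (fun k => Nat.eqb (Bcount u (state_at tr k)) 0)); [reflexivity|].
  intros k Hk. apply in_seq in Hk. rewrite state_at_cons by lia. reflexivity.
Qed.

Lemma xi_facts u r j tr : xi_Xi u r j tr = true ->
  (forall k, (1 <= k <= r-1)%nat -> Bcount u (state_at tr k) = 0%nat) /\
  Bcount u (state_at tr r) = j.
Proof.
  unfold xi_Xi. intros H. apply andb_true_iff in H as [H _]. apply andb_true_iff in H as [H1 H2].
  split.
  - intros k Hk. rewrite forallb_forall in H1. apply Nat.eqb_eq, H1, in_seq. lia.
  - apply Nat.eqb_eq; auto.
Qed.

Lemma Bhat_small u r j tr n : valid u tr -> length tr = r -> (1 <= n < r)%nat ->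
  xi_Xi u r j tr = true -> Bhat u (state_at tr n) = 0%nat.
Proof.
  intros Hv Hl Hn Hx. destruct (xi_facts _ _ _ _ Hx) as [H1 _].
  apply (GL u tr Hv); [lia|]. intros; apply H1; lia.
Qed.

Lemma Bhat_at_r u r j tr : valid u tr -> length tr = r -> (2 <= r)%nat ->
  xi_Xi u r j tr = true -> Bhat u (nth 0 tr []) = j.
Proof.
  intros Hv Hl Hr Hx. destruct (xi_facts _ _ _ _ Hx) as [H1 H2].
  inversion Hv as [Heq|s tr0 i v0 v1 Hv0 Hi Heq]; rewrite <- Heq in *; [simpl in Hl; lia|]. subst r.
  assert (Hs : Bhat u (state_at (divide s i v0 v1 :: s :: tr0) (length (s::tr0))) = 0%nat).
  { apply (GL u _ Hv); [simpl; lia|]. intros; apply H1; simpl in *; lia. }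
  rewrite state_at_cons, state_at_top in Hs by lia.
  simpl nth. rewrite HL by auto. rewrite <- H2. rewrite state_at_top. reflexivity.
Qed.

Definition Zf (x : R) := x * x + x + 1.
Definition bR (b : bool) : R := if b then 1 else 0.

Lemma INR_b2n b : INR (b2n b) = bR b.
Proof. destruct b; reflexivity. Qed.

Lemma Bhat_divide_R u s i v0 v1 : (i < length s)%nat ->
  INR (Bhat u (divide s i v0 v1)) = INR (Bhat u s) - bR (marked u (nth i s dflt))
    + bR ((if nuc_eq_dec v0 u then false else true) || marked u (nth i s dflt))
    + bR ((if nuc_eq_dec v1 u then false else true) || marked u (nth i s dflt)).
Proof.
  intros H. pose proof (count_divide (marked u) s i v0 v1 H) as E.
  rewrite !marked_cons in E. rewrite !Bhat_eq.
  apply (f_equal INR) in E. rewrite !plus_INR, !INR_b2n in E. lra.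
Qed.

Lemma inner_sum mu u s i : (i < length s)%nat ->
  sumR all_nucs (fun v0 => sumR all_nucs (fun v1 =>
    qmut mu (Vc u (nth i s dflt)) v0 * qmut mu (Vc u (nth i s dflt)) v1 *
    Zf (INR (Bhat u (divide s i v0 v1))))) =
  if marked u (nth i s dflt) then Zf (INR (Bhat u s) + 1)
  else (1-mu)^2 * Zf (INR (Bhat u s)) + 2*mu*(1-mu) * Zf (INR (Bhat u s) + 1)
       + mu^2 * Zf (INR (Bhat u s) + 2).
Proof.
  intros H.
  rewrite (sumR_ext_in _ _ (fun v0 => sumR all_nucs (fun v1 =>
    qmut mu (Vc u (nth i s dflt)) v0 * qmut mu (Vc u (nth i s dflt)) v1 *
    Zf (INR (Bhat u s) - bR (marked u (nth i s dflt))
    + bR ((if nuc_eq_dec v0 u then false else true) || marked u (nth i s dflt))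
    + bR ((if nuc_eq_dec v1 u then false else true) || marked u (nth i s dflt)))))).
  2:{ intros v0 _. apply sumR_ext_in. intros v1 _. rewrite Bhat_divide_R by auto. reflexivity. }
  set (M := INR (Bhat u s)).
  destruct (marked u (nth i s dflt)) eqn:Hm.
  - destruct (Vc u (nth i s dflt)); destruct u; simpl; unfold qmut; simpl; unfold bR, Zf; simpl; field.
  - rewrite (unmarked_Vc u _ Hm). destruct u; simpl; unfold qmut; simpl; unfold bR, Zf; simpl; field.
Qed.

Lemma alg_bound (k M mu : R) : 1 <= k -> 0 <= M <= k -> 0 <= mu <= 1 ->
  / k * (M * Zf (M+1) + (k - M) * ((1-mu)^2 * Zf M + 2*mu*(1-mu) * Zf (M+1) + mu^2 * Zf (M+2)))
  <= (1 + 2 / k) * (1 + 6 * mu) * Zf M.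
Proof.
  intros Hk HM Hmu.
  assert (E : M * Zf (M+1) + (k - M) * ((1-mu)^2 * Zf M + 2*mu*(1-mu) * Zf (M+1) + mu^2 * Zf (M+2))
    = k * Zf M + 2*M*(M+1) + (k-M)*(4*mu*(M+1) + 2*mu^2)) by (unfold Zf; ring).
  rewrite E.
  assert (E2 : (1 + 2 / k) * (1 + 6 * mu) * Zf M = / k * ((k + 2) * (1 + 6*mu) * Zf M)) by (field; lra).
  rewrite E2. apply Rmult_le_compat_l; [left; apply Rinv_0_lt_compat; lra|].
  unfold Zf.
  assert (h1 : 0 <= (k-M)*(mu*(4*M + 6) - (4*mu*(M+1) + 2*mu^2))) by (apply Rmult_le_pos; nra).
  assert (h2a : 0 <= k*mu) by nra.
  assert (h2b : 4*M+6 <= 6*(M*M+M+1)) by nra.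
  assert (h2 : k*mu*(4*M+6) <= 6*mu*k*(M*M+M+1)).
  { replace (6*mu*k*(M*M+M+1)) with ((k*mu)*(6*(M*M+M+1))) by ring.
    apply Rmult_le_compat_l; auto. }
  assert (h3 : (k-M)*mu*(4*M+6) <= k*mu*(4*M+6)) by nra.
  nra.
Qed.

Lemma sumR_zero {A} (l : list A) f : (forall x, In x l -> f x = 0) -> sumR l f = 0.
Proof. induction l; simpl; intros H; auto. rewrite H, IHl; auto. ring. Qed.

Lemma sum_seq_nth {B} (s : list B) d (h : B -> R) :
  sumR (seq 0 (length s)) (fun i => h (nth i s d)) = sumR s h.
Proof.
  induction s as [|c s IH]; simpl; auto. f_equal. rewrite <- seq_shift, sumR_map. simpl. exact IH.
Qed.

Lemma sum_marked u s x y :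
  sumR s (fun c => if marked u c then x else y) = INR (Bhat u s) * x + (INR (length s) - INR (Bhat u s)) * y.
Proof.
  rewrite Bhat_eq. induction s as [|c s IH]; cbn [sumR filter length]; [simpl; ring|].
  rewrite IH. destruct (marked u c); cbn [length]; rewrite ?S_INR; ring.
Qed.

Definition gfun (u : nuc) (r j : nat) (tr : list state) : R :=
  if xi_Xi u r j tr then Zf (INR (Bhat u (nth 0 tr []))) else 0.

Lemma Bhat_le_len u s : (Bhat u s <= length s)%nat.
Proof. rewrite Bhat_eq. apply filter_length_le. Qed.

Lemma Gop_bound mu u r j s tr : 0 <= mu <= 1 -> valid u (s::tr) -> (r <= length (s::tr))%nat ->
  Gop mu u (gfun u r j) (s::tr) <=
  (1 + 2 / INR (length s)) * (1 + 6 * mu) * gfun u r j (s::tr).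
Proof.
  intros Hmu Hv Hr. unfold Gop. pose proof (valid_len _ _ _ Hv) as Hl.
  unfold gfun at 2. destruct (xi_Xi u r j (s::tr)) eqn:Hx.
  - rewrite (sumR_ext_in _ _ (fun i => / INR (length s) *
       (if marked u (nth i s dflt) then Zf (INR (Bhat u s) + 1)
       else (1-mu)^2 * Zf (INR (Bhat u s)) + 2*mu*(1-mu) * Zf (INR (Bhat u s) + 1)
       + mu^2 * Zf (INR (Bhat u s) + 2)))).
    + rewrite sumR_scal.
      rewrite (sum_seq_nth s dflt (fun c => if marked u c then Zf (INR (Bhat u s) + 1)
       else (1-mu)^2 * Zf (INR (Bhat u s)) + 2*mu*(1-mu) * Zf (INR (Bhat u s) + 1)
       + mu^2 * Zf (INR (Bhat u s) + 2))).
      rewrite sum_marked. simpl nth.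
      apply alg_bound; auto.
      * rewrite Hl. simpl length. rewrite S_INR. pose proof (pos_INR (length tr)). lra.
      * split; [apply pos_INR| apply le_INR, Bhat_le_len].
    + intros i Hi. apply in_seq in Hi. rewrite <- (inner_sum mu u s i) by lia.
      rewrite <- sumR_scal. apply sumR_ext_in; intros v0 _.
      rewrite <- sumR_scal. apply sumR_ext_in; intros v1 _.
      unfold gfun. rewrite xi_cons by (simpl in *; lia). rewrite Hx. reflexivity.
  - rewrite sumR_zero; [lra|]. intros i _. apply sumR_zero; intros v0 _. apply sumR_zero; intros v1 _.
    unfold gfun. rewrite xi_cons by (simpl in *; lia). rewrite Hx. ring.
Qed.

Lemma EV_le_in d f g : (forall w tr, In (w,tr) d -> w * f tr <= w * g tr) -> EV d f <= EV d g.
Proof. intros H. unfold EV. apply sumR_le_in. intros [w tr] Hin. apply H; auto. Qed.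

Lemma EV_scal d c f : EV d (fun tr => c * f tr) = c * EV d f.
Proof. unfold EV. rewrite <- sumR_scal. apply sumR_ext_in. intros; ring. Qed.

Lemma EV_nonneg d f : (forall w tr, In (w,tr) d -> 0 <= w * f tr) -> 0 <= EV d f.
Proof.
  intros H. replace 0 with (EV d (fun _ => 0)).
  - apply EV_le_in. intros w tr Hin. rewrite Rmult_0_r. apply H; auto.
  - unfold EV. apply sumR_zero. intros; ring.
Qed.

Lemma Zf_pos x : 0 <= x -> 0 < Zf x.
Proof. unfold Zf; nra. Qed.

Lemma gfun_nonneg u r j tr : 0 <= gfun u r j tr.
Proof. unfold gfun. destruct xi_Xi; [left; apply Zf_pos, pos_INR|lra]. Qed.

Definition Phi mu u r j m := EV (Defs.dist mu u m) (gfun u r j).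

Lemma Phi_nonneg mu u r j m : 0 <= mu <= 1 -> 0 <= Phi mu u r j m.
Proof.
  intros Hmu. apply EV_nonneg. intros w tr Hin. destruct (dist_support mu u m Hmu w tr Hin) as [Hw _].
  apply Rmult_le_pos; auto using gfun_nonneg.
Qed.

Lemma Phi_step mu u r j m : 0 <= mu <= 1 -> (r <= S m)%nat ->
  Phi mu u r j (S m) <= (1 + 2 / INR (S m)) * (1 + 6 * mu) * Phi mu u r j m.
Proof.
  intros Hmu Hr. unfold Phi. change (Defs.dist mu u (S m)) with (step mu u (Defs.dist mu u m)).
  rewrite EV_step, <- EV_scal. apply EV_le_in. intros w tr Hin.
  destruct (dist_support mu u m Hmu w tr Hin) as [Hw [Hv Hl]].
  destruct tr as [|s tr0]; [simpl in Hl; lia|].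
  apply Rmult_le_compat_l; auto.
  pose proof (valid_len _ _ _ Hv) as Hls. rewrite Hl in Hls. rewrite <- Hls.
  apply Gop_bound; auto. lia.
Qed.

Lemma Phi_bound mu u r j : 0 <= mu <= 1 -> (1 <= r)%nat -> forall d,
  Phi mu u r j (r - 1 + d) <= Phi mu u r j (r - 1) *
    (INR (r + d) * INR (r + d + 1) / (INR r * INR (r + 1))) * (1 + 6 * mu) ^ d.
Proof.
  intros Hmu Hr. assert (0 < INR r) by (apply lt_0_INR; lia).
  induction d as [|d IH].
  - rewrite Nat.add_0_r. simpl pow.
    assert (E : INR r * INR (r+1) / (INR r * INR (r + 1)) = 1).
    { field. rewrite plus_INR. simpl. lra. }
    rewrite !Nat.add_0_r, E. lra.
  - replace (r - 1 + S d)%nat with (S (r - 1 + d)) by lia.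
    eapply Rle_trans; [apply Phi_step; auto; lia|].
    replace (S (r - 1 + d)) with (r + d)%nat by lia.
    assert (0 <= 1 + 6 * mu) by lra.
    assert (0 < INR (r + d)) by (apply lt_0_INR; lia).
    eapply Rle_trans.
    { apply Rmult_le_compat_l; [apply Rmult_le_pos; [|lra]; apply Rplus_le_le_0_compat;
        [lra| apply Rlt_le, Rdiv_lt_0_compat; lra]| exact IH]. }
    right. replace (r + S d)%nat with (r + d + 1)%nat by lia.
    rewrite !(plus_INR (r + d)), (plus_INR r 1). simpl pow. simpl INR.
    rewrite !plus_INR in *. simpl INR. field. pose proof (pos_INR r). split; lra.
Qed.

Lemma sumR_const {A} (l : list A) c : sumR l (fun _ => c) = INR (length l) * c.
Proof. induction l; cbn [sumR length]; [simpl; ring|]. rewrite IHl, S_INR. ring. Qed.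

Lemma Gop_const mu u f s tr0 : valid u (s::tr0) ->
  (forall i v0 v1, f (divide s i v0 v1 :: s :: tr0) = f (s::tr0)) ->
  Gop mu u f (s::tr0) = f (s::tr0).
Proof.
  intros Hv Hf. unfold Gop. pose proof (valid_len _ _ _ Hv) as Hl.
  assert (Hk : 0 < INR (length s)) by (apply lt_0_INR; rewrite Hl; simpl; lia).
  rewrite (sumR_ext_in _ _ (fun _ => / INR (length s) * f (s::tr0))).
  - rewrite sumR_const, length_seq. field. lra.
  - intros i _. rewrite (sumR_ext_in _ _ (fun v0 => sumR all_nucs (fun v1 =>
       / INR (length s) * (qmut mu (Vc u (nth i s (mkCell [] []))) v0 *
        qmut mu (Vc u (nth i s (mkCell [] []))) v1 * f (s::tr0))))).
    + destruct (Vc u (nth i s (mkCell [] []))); unfold qmut; simpl; field; lra.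
    + intros v0 _. apply sumR_ext_in. intros v1 _. rewrite Hf. reflexivity.
Qed.

Lemma PF_consistent mu u r j : 0 <= mu <= 1 -> forall m, (r <= S m)%nat ->
  EV (Defs.dist mu u (S m)) (fun tr => if xi_Xi u r j tr then 1 else 0) =
  EV (Defs.dist mu u m) (fun tr => if xi_Xi u r j tr then 1 else 0).
Proof.
  intros Hmu m Hr. change (Defs.dist mu u (S m)) with (step mu u (Defs.dist mu u m)).
  rewrite EV_step. unfold EV. apply sumR_ext_in. intros [w tr] Hin.
  destruct (dist_support mu u m Hmu w tr Hin) as [_ [Hv Hl]]. cbn [fst snd].
  destruct tr as [|s tr0]; [simpl in Hl; lia|].
  rewrite Gop_const; auto. intros. rewrite xi_cons by (simpl in *; lia). reflexivity.
Qed.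

Lemma PF_consistent_d mu u r j : 0 <= mu <= 1 -> (1 <= r)%nat -> forall d,
  EV (Defs.dist mu u (r - 1 + d)) (fun tr => if xi_Xi u r j tr then 1 else 0) =
  EV (Defs.dist mu u (r - 1)) (fun tr => if xi_Xi u r j tr then 1 else 0).
Proof.
  intros Hmu Hr d. induction d as [|d IH]; [rewrite Nat.add_0_r; reflexivity|].
  replace (r - 1 + S d)%nat with (S (r - 1 + d)) by lia. rewrite PF_consistent; auto. lia.
Qed.

Lemma Phi_init mu u r j : 0 <= mu <= 1 -> (2 <= r)%nat -> (j <= 2)%nat ->
  Phi mu u r j (r - 1) <= 7 * EV (Defs.dist mu u (r - 1)) (fun tr => if xi_Xi u r j tr then 1 else 0).
Proof.
  intros Hmu Hr Hj. unfold Phi. rewrite <- EV_scal. apply EV_le_in. intros w tr Hin.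
  destruct (dist_support mu u _ Hmu w tr Hin) as [Hw [Hv Hl]].
  apply Rmult_le_compat_l; auto. unfold gfun. destruct (xi_Xi u r j tr) eqn:Hx; [|lra].
  rewrite (Bhat_at_r u r j tr) by (auto; lia).
  assert (INR j <= 2) by (apply le_INR in Hj; simpl in Hj; lra).
  pose proof (pos_INR j). unfold Zf. nra.
Qed.

Lemma exp_pow_le x n : (exp x) ^ n = exp (INR n * x).
Proof.
  induction n as [|n IH]; simpl pow. { simpl. rewrite Rmult_0_l, exp_0. reflexivity. }
  rewrite IH, <- exp_plus, S_INR. f_equal. ring.
Qed.

Lemma exp_le_mono x y : x <= y -> exp x <= exp y.
Proof. intros [H|H]; [left; apply exp_increasing; auto| rewrite H; lra]. Qed.

Lemma frac_bound (n r : R) : 1 <= n -> 1 <= r -> (n + 1) / (n * (r * (r + 1))) <= 2 / (r * r).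
Proof.
  intros Hn Hr.
  replace ((n + 1) / (n * (r * (r + 1)))) with ((1 + / n) * / (r * (r + 1))) by (field; lra).
  replace (2 / (r * r)) with (2 * / (r * r)) by (unfold Rdiv; ring).
  apply Rmult_le_compat.
  - assert (0 < / n) by (apply Rinv_0_lt_compat; lra). lra.
  - left; apply Rinv_0_lt_compat; nra.
  - assert (/ n <= / 1) by (apply Rinv_le_contravar; lra). rewrite Rinv_1 in H. lra.
  - apply Rinv_le_contravar; nra.
Qed.

Lemma K_bound (mu : nat -> R) theta : (forall n, 0 <= mu n <= 1) ->
  Un_cv (fun n => INR n * mu n) theta -> exists K, 0 <= K /\ forall n, INR n * mu n <= K.
Proof.
  intros Hmu Hcv. destruct (Hcv 1 Rlt_0_1) as [N HN].
  exists (Rabs theta + 1 + INR N). split; [pose proof (Rabs_pos theta); pose proof (pos_INR N); lra|].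
  intros n. destruct (le_lt_dec N n) as [Hle|Hlt].
  - specialize (HN n Hle). unfold R_dist in HN. pose proof (pos_INR N).
    pose proof (Rle_abs theta). apply Rabs_def2 in HN. lra.
  - specialize (Hmu n). pose proof (pos_INR n). apply lt_INR in Hlt.
    pose proof (Rabs_pos theta). nra.
Qed.

Theorem mainTheorem15 :
  forall (a : R) (mu : nat -> R) (theta : R) (u : nuc),
    0 < a < 1 ->
    (forall n, 0 <= mu n <= 1) ->
    0 <= theta ->
    Un_cv (fun n => INR n * mu n) theta ->
    exists c : R, 0 < c /\
      forall (r j n : nat),
        (2 <= r)%nat -> (j = 1 \/ j = 2)%nat -> (1 <= n)%nat ->
        0 < Prob (mu n) u (Nat.max n r) (xi_Xi u r j) ->
        condProb (mu n) u (Nat.max n r) (B_gt u n a) (xi_Xi u r j)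
          <= condProb (mu n) u (Nat.max n r) (Bhat_gt u n a) (xi_Xi u r j)
        /\
        condProb (mu n) u (Nat.max n r) (Bhat_gt u n a) (xi_Xi u r j)
          <= c / (INR r ^ 2).
Proof.
  intros a mu theta u Ha Hmu Htheta Hcv.
  destruct (K_bound mu theta Hmu Hcv) as [K [HK0 HK]].
  exists (14 * exp (6 * K) / a ^ 2). split.
  { pose proof (exp_pos (6*K)). apply Rdiv_lt_0_compat; [lra| apply pow_lt; lra]. }
  intros r j n Hr Hj Hn HPF.
  set (N := Nat.max n r) in *. set (m := mu n) in *. set (F := xi_Xi u r j) in *.
  assert (Hm : 0 <= m <= 1) by apply Hmu.
  assert (HnR : 1 <= INR n) by (assert (INR 1 <= INR n) by (apply le_INR; lia); simpl in *; lra).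
  assert (HrR : 2 <= INR r) by (assert (INR 2 <= INR r) by (apply le_INR; lia); simpl in *; lra).
  set (PF := Prob m u N F) in *.
  split.
  - unfold condProb. fold PF. apply Rmult_le_compat_r; [left; apply Rinv_0_lt_compat; auto|].
    rewrite !Prob_EV. apply EV_le_in. intros w tr Hin.
    destruct (dist_support m u _ Hm w tr Hin) as [Hw _]. apply Rmult_le_compat_l; auto.
    destruct (F tr); [rewrite !andb_true_r|rewrite !andb_false_r; lra].
    unfold B_gt, Bhat_gt.
    destruct (Rlt_dec a _) as [H1|H1]; destruct (Rlt_dec a _) as [H2|H2]; try lra.
    exfalso. apply H2. eapply Rlt_le_trans; [exact H1|].
    unfold Rdiv. apply Rmult_le_compat_r; [left; apply Rinv_0_lt_compat; lra|].
    apply le_INR, Bcount_le_Bhat.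
  - unfold condProb. fold PF.
    enough (Hmain : Prob m u N (fun tr => Bhat_gt u n a tr && F tr) <= 14 * exp (6 * K) / a ^ 2 / INR r ^ 2 * PF).
    { apply (Rmult_le_reg_r PF); auto.
      unfold Rdiv at 1. rewrite Rmult_assoc, Rinv_l, Rmult_1_r by (apply Rgt_not_eq; assumption).
      exact Hmain. }
    destruct (le_lt_dec r n) as [Hrn|Hnr].
    +
      assert (HN : N = n) by (unfold N; lia). rewrite HN in *.
      rewrite Prob_EV.
      assert (HnN : (n - 1 = r - 1 + (n - r))%nat) by lia.
      assert (Han : 0 < a * INR n) by nra.
      assert (S1 : EV (Defs.dist m u (n-1)) (fun tr => if Bhat_gt u n a tr && F tr then 1 else 0)
                   <= / (a * INR n)^2 * Phi m u r j (n-1)).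
      { unfold Phi. rewrite <- EV_scal. apply EV_le_in. intros w tr Hin.
        destruct (dist_support m u _ Hm w tr Hin) as [Hw [Hv Hl]].
        apply Rmult_le_compat_l; auto.
        unfold gfun. fold F. destruct (F tr) eqn:HF; [rewrite andb_true_r | rewrite andb_false_r; lra].
        assert (Hinv : 0 < / (a * INR n)^2) by (apply Rinv_0_lt_compat, pow_lt; lra).
        unfold Bhat_gt. destruct Rlt_dec as [H1|H1];
          [|apply Rmult_le_pos; [lra| left; apply Zf_pos, pos_INR]].
        assert (Hst : state_at tr n = nth 0 tr []).
        { unfold state_at. rewrite Hl. replace (S (n-1) - n)%nat with 0%nat by lia. reflexivity. }
        rewrite Hst in H1. set (B := INR (Bhat u (nth 0 tr []))) in *.
        assert (HB : a * INR n < B).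
        { replace B with (B / INR n * INR n) by (field; lra). apply Rmult_lt_compat_r; lra. }
        assert (HZ : (a * INR n)^2 <= Zf B) by (unfold Zf; pose proof (pos_INR (Bhat u (nth 0 tr []))); nra).
        apply Rle_trans with (/ (a * INR n)^2 * (a * INR n)^2).
        - right. field. lra.
        - apply Rmult_le_compat_l; lra. }
      assert (S2 : Phi m u r j (n-1) <= Phi m u r j (r-1) *
          (INR n * INR (n + 1) / (INR r * INR (r + 1))) * (1 + 6 * m) ^ (n - r)).
      { rewrite HnN. pose proof (Phi_bound m u r j Hm ltac:(lia) (n - r)) as HB.
        replace (r + (n - r))%nat with n in HB by lia. exact HB. }
      assert (S3 : Phi m u r j (r-1) <= 7 * PF).
      { unfold PF, F. rewrite Prob_EV. rewrite HN, HnN, PF_consistent_d by (auto; lia).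
        apply Phi_init; auto. destruct Hj; lia. }
      assert (S4 : (1 + 6 * m) ^ (n - r) <= exp (6 * K)).
      { apply Rle_trans with (exp (6 * m) ^ (n - r)).
        - apply pow_incr. split; [lra| apply exp_ineq1_le].
        - rewrite exp_pow_le. apply exp_le_mono.
          assert (INR (n - r) <= INR n) by (apply le_INR; lia).
          pose proof (HK n). fold m in H0. nra. }
      assert (HPhi0 : 0 <= Phi m u r j (r - 1)) by (apply Phi_nonneg; auto).
      assert (Hpow0 : 0 <= (1 + 6 * m) ^ (n - r)) by (apply pow_le; lra).
      rewrite !plus_INR in S2. simpl INR in S2.
      set (nR := INR n) in *. set (rR := INR r) in *. set (X := (1 + 6 * m) ^ (n - r)) in *.
      set (E6 := exp (6 * K)) in *.
      assert (Hfr0 : 0 <= nR * (nR + 1) / (rR * (rR + 1))) by (apply Rmult_le_pos; [nra| left; apply Rinv_0_lt_compat; nra]).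
      eapply Rle_trans; [exact S1|].
      apply Rle_trans with (/ (a * nR) ^ 2 * (7 * PF * (nR * (nR + 1) / (rR * (rR + 1))) * X)).
      { apply Rmult_le_compat_l; [left; apply Rinv_0_lt_compat, pow_lt; lra|].
        eapply Rle_trans; [exact S2|]. apply Rmult_le_compat_r; [lra|].
        apply Rmult_le_compat_r; [lra|]. exact S3. }
      replace (/ (a * nR) ^ 2 * (7 * PF * (nR * (nR + 1) / (rR * (rR + 1))) * X))
        with ((7 * PF * X / a^2) * ((nR + 1) / (nR * (rR * (rR + 1))))) by (field; repeat split; nra).
      replace (14 * E6 / a ^ 2 / rR ^ 2 * PF) with ((7 * PF * E6 / a^2) * (2 / (rR * rR)))
        by (field; split; nra).
      assert (Ha2 : 0 < / a^2) by (apply Rinv_0_lt_compat, pow_lt; lra).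
      apply Rmult_le_compat.
      * unfold Rdiv. apply Rmult_le_pos; [|lra]. apply Rmult_le_pos; [|lra]. lra.
      * apply Rmult_le_pos; [lra| left; apply Rinv_0_lt_compat; nra].
      * unfold Rdiv. apply Rmult_le_compat_r; [lra|]. apply Rmult_le_compat_l; [lra|exact S4].
      * apply frac_bound; lra.
    +
      assert (HN : N = r) by (unfold N; lia). rewrite HN in *.
      rewrite Prob_EV. unfold EV. rewrite sumR_zero.
      { apply Rmult_le_pos; [|lra]. apply Rmult_le_pos; [apply Rmult_le_pos|].
        - pose proof (exp_pos (6*K)). lra.
        - left; apply Rinv_0_lt_compat, pow_lt; lra.
        - left; apply Rinv_0_lt_compat, pow_lt; lra. }
      intros [w tr] Hin. destruct (dist_support m u _ Hm w tr Hin) as [_ [Hv Hl]]. cbn [fst snd].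
      destruct (F tr) eqn:HF; [|rewrite andb_false_r; ring].
      unfold Bhat_gt. replace (INR (Bhat u (state_at tr n))) with 0.
      * destruct Rlt_dec as [H1|H1]; [exfalso; unfold Rdiv in H1; rewrite Rmult_0_l in H1; lra|simpl; ring].
      * rewrite (Bhat_small u r j tr n Hv); auto; lia.
Qed.
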